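(* Let $G=(V,E)$ be a finite connected graph, $p$ a probability vector on $V$ with $p(i)>0$ for all $i$, and consider the Markov chain on $S=(-\mathbb{N}_0)^V$ which moves from $x$ to $T_ix$ with probability $p(i)$, with transition matrix $M$. Then the equation $\pi M=\pi$ has a solution $\pi$ which is a probability distribution on $S$.
   Context: For $x\in S$ and $i\in V$, $T_ix\in S$ is obtained by first setting $x'_i=\max\{x_k:\operatorname{dist}(k,i)\le1\}+1$, $x'_j=x_j$ for $j\ne i$ (dist the graph distance), and then $(T_ix)_j=x'_j-\max_kx'_k$ (height profile after dropping a particle at $i$, seen from the maximum). *)

(* Defs.v *)
From HB Require Import structures.
From mathcomp Require Import all_boot all_order all_algebra.
From mathcomp Require Import all_classical all_reals all_analysis.
Set Implicit Arguments. Unset Strict Implicit. Unset Printing Implicit Defensive.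
Import Order.TTheory GRing.Theory Num.Theory.
Local Open Scope ring_scope.

Definition simple_graph (V : finType) (e : rel V) : Prop :=
  symmetric e /\ irreflexive e.
Definition connected_graph (V : finType) (e : rel V) : Prop :=
  forall u v : V, connect e u v.

Definition config (V : finType) := {ffun V -> int}.
Definition state_space (V : finType) : set (config V) :=
  [set x | forall j, x j <= 0].

(* dist(k,i) <= 1  iff  k = i or k adjacent to i *)
Definition nbhd (V : finType) (e : rel V) (i k : V) : bool := (k == i) || e k i.

Definition drop (V : finType) (e : rel V) (i : V) (x : config V) : config V :=
  [ffun j => if j == i
             then (\big[Order.max/x i]_(k | nbhd e i k) x k) + 1
             else x j].

Definition T (V : finType) (e : rel V) (i : V) (x : config V) : config V :=
  let x' := drop e i x in
  [ffun j => x' j - \big[Order.max/x' i]_(k : V) x' k].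

Definition M (R : realType) (V : finType) (e : rel V) (p : V -> R)
  (x y : config V) : R :=
  \sum_(i : V | T e i x == y) p i.

(* Main.v *)
Require Import Defs.
From HB Require Import structures.
From mathcomp Require Import all_boot all_order all_algebra.
From mathcomp Require Import all_classical all_reals all_analysis.
From mathcomp Require Import zify.
Set Implicit Arguments. Unset Strict Implicit. Unset Printing Implicit Defensive.
Import Order.TTheory GRing.Theory Num.Theory.
Local Open Scope ring_scope.
Local Open Scope classical_set_scope.
Section Sync.
Variables (V : finType) (e : rel V).
Hypothesis esym : symmetric e.

Local Notation D := (Defs.drop e).

Lemma drop_other i x j : j != i -> D i x j = x j.
Proof. by move=> /negPf h; rewrite /Defs.drop ffunE h. Qed.

Lemma drop_self i x : D i x i = \big[Order.max/x i]_(k | nbhd e i k) x k + 1.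
Proof. by rewrite /Defs.drop ffunE eqxx. Qed.

Lemma bigmax_shift (P : pred V) (F : V -> int) (x0 c : int) :
  \big[Order.max/x0 + c]_(k | P k) (F k + c) = \big[Order.max/x0]_(k | P k) F k + c.
Proof.
elim/big_ind2: _ => //.
by move=> a b a' b' -> ->; rewrite addr_maxl.
Qed.

Lemma drop_shift i (x y : config V) c : (forall j, x j = y j + c) ->
  forall j, D i x j = D i y j + c.
Proof.
move=> H j; rewrite /Defs.drop !ffunE; case: (j == i); last exact: H.
rewrite -addrAC; congr (_ + _).
rewrite H -bigmax_shift; apply: eq_bigr => k _; exact: H.
Qed.

Definition Tn (y : config V) (i : V) : config V :=
  [ffun j => y j - \big[Order.max/y i]_(k : V) y k].

Lemma T_Tn i x : T e i x = Tn (D i x) i.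
Proof. by []. Qed.

Lemma Tn_eq (y y' : config V) i c : (forall j, y j = y' j + c) -> Tn y i = Tn y' i.
Proof.
move=> H; apply/ffunP => j; rewrite !ffunE.
have -> : \big[Order.max/y i]_(k : V) y k = \big[Order.max/y' i]_(k : V) y' k + c.
  by rewrite -bigmax_shift H; apply: eq_bigr => k _; exact: H.
by rewrite H opprD addrACA subrr addr0.
Qed.

Lemma T_eq i (x y : config V) c : (forall j, x j = y j + c) -> T e i x = T e i y.
Proof. by move=> H; rewrite !T_Tn; apply: Tn_eq; apply: drop_shift. Qed.

Lemma foldrT_eqc (w : seq V) (x : config V) :
  exists c, forall j, foldr (T e) x w j = foldr D x w j + c.
Proof.
elim: w => [|i w [c IH]] /=; first by exists 0 => j; rewrite addr0.
rewrite (T_eq i IH) T_Tn.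
exists (- \big[Order.max/(D i (foldr D x w)) i]_(k : V) (D i (foldr D x w)) k).
by move=> j; rewrite /Tn ffunE.
Qed.

Lemma foldr_notin (l : seq V) (x : config V) j : j \notin l -> foldr D x l j = x j.
Proof.
elim: l => //= a l IH; rewrite inE negb_or => /andP[ja jl].
by rewrite drop_other // IH.
Qed.

Lemma drop_ge_nbr (l : seq V) (x : config V) a b : uniq l -> a \in l -> b \notin l -> e b a ->
  x b + 1 <= foldr D x l a.
Proof.
elim: l => //= c l IH /andP[cl ul]; rewrite inE => al; rewrite inE negb_or.
move=> /andP[bc bl] eba.
have [ac|nac] := eqVneq a c.
  subst c; rewrite drop_self lerD2r -(foldr_notin x bl).
  by apply: le_bigmax_cond; rewrite /nbhd eba orbT.
rewrite drop_other //; apply: IH => //; by move: al; rewrite (negPf nac).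
Qed.

Inductive good (r : V) : seq V -> Prop :=
| good_nil : good r [::]
| good_rcons p b u : good r p -> u \in r :: p -> e u b -> good r (rcons p b).

Lemma phase1 r vs : good r vs -> uniq (r :: vs) -> forall x v, v \in vs ->
  foldr D x (r :: vs) v < foldr D x (r :: vs) r.
Proof.
elim => // p b u gp IH ur eub.
rewrite -(rcons_cons r p b) rcons_uniq => /andP[bn un] x v.
rewrite !foldr_rcons mem_rcons inE => /orP[/eqP ->|vp]; last exact: IH.
set y := D b x.
have hb : foldr D y (r :: p) b = y b by rewrite foldr_notin.
have hu : y b + 1 <= foldr D y (r :: p) u.
  by apply: drop_ge_nbr => //; rewrite esym.
rewrite hb; move: ur; rewrite inE => /orP[/eqP urr|up].
  by subst u; rewrite -lezD1.
by rewrite -lezD1 (le_trans hu) // ltW // IH.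
Qed.

Lemma phase2 r vs : good r vs -> uniq (r :: vs) -> exists d : V -> int,
  (forall k, k \in r :: vs -> 0 <= d k) /\
  forall y : config V, (forall v, v != r -> y v < y r) -> forall v,
    foldr D y (rev vs) v = if v \in r :: vs then y r + d v else y v.
Proof.
elim => [_|p b u gp IH ur eub].
  exists (fun _ => 0); split => // y _ v /=; rewrite inE.
  by case: eqP => [->|]; rewrite ?addr0.
rewrite -rcons_cons rcons_uniq => /andP[bn un].
have [d [d0 Hd]] := IH un.
pose D' := \big[Order.max/0]_(k | nbhd e b k && (k \in r :: p)) d k.
have D'0 : 0 <= D' by apply: bigmax_ge_id.
have br : b != r by apply: contraNneq bn => ->; rewrite inE eqxx.
exists (fun v => if v == b then D' + 1 else d v); split.
  move=> k; rewrite mem_rcons inE; case: eqP => [_ _|_ /= kin].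
    by rewrite addr_ge0.
  exact: d0.
move=> y ymax v.
rewrite rev_rcons mem_rcons inE /=.
set z := foldr D y (rev p).
have zb : z b = y b by rewrite /z Hd // (negPf bn).
have [vb|vnb] := eqVneq v b; last first.
  by rewrite drop_other // Hd //.
subst v; rewrite /= drop_self addrA; congr (_ + _).
have zk k : k \in r :: p -> z k = y r + d k by move=> kin; rewrite /z Hd // kin.
apply/eqP; rewrite eq_le; apply/andP; split.
  apply: bigmax_le.
    by rewrite zb ltW // (lt_le_trans (ymax _ br)) // lerDl.
  move=> k nk; case kin: (k \in r :: p).
    by rewrite zk // lerD2l; apply: le_bigmax_cond; rewrite nk kin.
  rewrite /z Hd // kin; apply: ltW; apply: (lt_le_trans (ymax k _)); last by rewrite lerDl.
  by apply: contraFneq kin => ->; rewrite inE eqxx.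
rewrite -lerBrDl; apply: bigmax_le.
  have nu : nbhd e b u by rewrite /nbhd eub orbT.
  rewrite subr_ge0; apply: le_trans (le_bigmax_cond _ _ nu).
  by rewrite zk // lerDl d0.
move=> k /andP[nk kin]; rewrite lerBrDl -zk //; exact: le_bigmax_cond.
Qed.
End Sync.
Section Sync2.
Variables (V : finType) (e : rel V).
Hypothesis esym : symmetric e.
Hypothesis conn : forall u v : V, connect e u v.
Local Notation D := (Defs.drop e).

Lemma exists_order_n r n : (n < #|V|)%N -> exists vs,
  good e r vs /\ uniq (r :: vs) /\ size vs = n.
Proof.
elim: n => [_|n IH lt]; first by exists [::]; split; [constructor|].
have [vs [g [u s]]] := IH (ltnW lt).
have [v0 v0n] : exists v0, v0 \notin r :: vs.
  apply/existsP; apply: contraLR lt => /existsPn H; rewrite -leqNgt.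
  have -> : #|V| = #|[pred x in r :: vs]|.
    by apply: eq_card => x; rewrite inE /= (negbNE (H x)).
  by rewrite (elimT card_uniqP u) /= s.
case: (pickP (fun b => (b \notin r :: vs) && [exists u, (u \in r :: vs) && e u b])).
  move=> b /andP[bn /existsP[u' /andP[u'in eub]]].
  exists (rcons vs b); split; first exact: good_rcons g u'in eub.
  by rewrite -rcons_cons rcons_uniq bn u size_rcons s.
move=> H; exfalso.
have cl : closed_mem e (mem (r :: vs)).
  move=> x y exy; apply/idP/idP => [xi|yi]; apply/negPn/negP => ni.
    by move: (H y); rewrite ni /=; move/negbT/existsPn/(_ x); rewrite xi exy.
  by move: (H x); rewrite ni /=; move/negbT/existsPn/(_ y); rewrite yi esym exy.
have h := closed_connect cl (conn r v0).
by move: h; rewrite (negPf v0n) inE eqxx.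
Qed.

Lemma exists_order r : exists vs, good e r vs /\ uniq (r :: vs) /\ forall v, v \in r :: vs.
Proof.
have lt : (#|V|.-1 < #|V|)%N by rewrite prednK //; apply/card_gt0P; exists r.
have [vs [g [u s]]] := exists_order_n r lt.
exists vs; split => //; split => // v; apply/negPn/negP => vn.
have : (#|[pred x in r :: vs]| <= #|predC1 v|)%N.
  apply: subset_leq_card; apply/fintype.subsetP => x /=; rewrite !inE.
  by apply: contraTneq => ->.
by rewrite cardC1 (elimT card_uniqP u) /= s ltnn.
Qed.

Lemma sync (r : V) : exists w : seq V, w != [::] /\
  forall x y : config V, foldr (T e) x w = foldr (T e) y w.
Proof.
have [vs [g [u cov]]] := exists_order r.
have [d [_ Hd]] := phase2 g u.
have key (x : config V) v : foldr D x (rev vs ++ r :: vs) v =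
    foldr D x (r :: vs) r + d v.
  rewrite foldr_cat Hd ?cov // => v' v'r.
  apply: (phase1 esym g u); move: (cov v'); rewrite inE (negPf v'r) //.
exists (rev vs ++ r :: vs); split; first by case: (rev vs).
move=> x y; set w := rev vs ++ r :: vs.
have [i [w' ew]] : exists i w', w = i :: w' by rewrite /w; case: (rev vs) => [|a l]; eexists; eexists.
rewrite ew /=.
have [c1 H1] := foldrT_eqc e w' x; have [c2 H2] := foldrT_eqc e w' y.
rewrite (T_eq e i H1) (T_eq e i H2) !T_Tn.
apply: (@Tn_eq _ _ _ i (foldr D x (r :: vs) r - foldr D y (r :: vs) r)) => j.
have kx : D i (foldr D x w') j = foldr D x (r :: vs) r + d j.
  by rewrite -[LHS]/(foldr D x (i :: w') j) -ew key.
have ky : D i (foldr D y w') j = foldr D y (r :: vs) r + d j.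
  by rewrite -[LHS]/(foldr D y (i :: w') j) -ew key.
rewrite kx ky; set a := foldr D x _ r; set b := foldr D y _ r.
by rewrite addrAC addrCA subrr addr0.
Qed.
End Sync2.
Lemma sum_shift (R : realType) (beta : nat -> R) (L N : nat) :
  \sum_(0 <= k < L + N) beta k =
  \sum_(0 <= k < L) beta k + \sum_(0 <= k < N) beta (L + k)%N.
Proof.
elim: N => [|N IH]; first by rewrite addn0 [X in _ = _ + X]big_geq // addr0.
by rewrite addnS !big_nat_recr //= IH addrA.
Qed.

Lemma geom_block_bound (R : realType) (beta : nat -> R) (L : nat) (r : R) :
  (0 < L)%N -> 0 <= r < 1 -> (forall k, 0 <= beta k <= 1) ->
  (forall k, beta (L + k)%N <= r * beta k) ->
  forall N, \sum_(0 <= k < N) beta k <= L%:R / (1 - r).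
Proof.
move=> L0 /andP[r0 r1] b01 brec N.
have b0 k : 0 <= beta k by case/andP: (b01 k).
set B := fun N => \sum_(0 <= k < N) beta k.
have mono : B N <= B (L + N)%N.
  rewrite /B addnC [X in _ <= X](big_cat_nat (n := N)) ?leq_addr //= lerDl.
  apply: sumr_ge0 => k _; exact: b0.
have h2 : \sum_(0 <= k < L) beta k <= L%:R.
  apply: le_trans (ler_sum _ (fun k _ => (andP (b01 k)).2)) _.
  by rewrite sumr_const_nat subn0.
have h3 : \sum_(0 <= k < N) beta (L + k)%N <= r * B N.
  rewrite /B mulr_sumr; apply: ler_sum => k _; exact: brec.
have h4 : B (L + N)%N <= L%:R + r * B (L + N)%N.
  rewrite {1}/B sum_shift; apply: lerD => //.
  apply: le_trans h3 _; apply: ler_wpM2l; [exact: r0 | exact: mono].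
have r1' : 0 < 1 - r by rewrite subr_gt0.
apply: le_trans mono _; rewrite ler_pdivlMr // mulrBr mulr1 lerBlDr.
by rewrite mulrC.
Qed.
Section EsumExtra.
Local Open Scope ereal_scope.
Variables (R : realType) (T : choiceType).

Lemma esum_subset (I J : set T) (a : T -> \bar R) : I `<=` J ->
  \esum_(x in I) a x <= \esum_(x in J) a x.
Proof.
move=> IJ; apply: ge_ereal_sup => _ [X [finX XI] <-]; apply: esum_ge.
by exists X => //; split => //; exact: subset_trans XI IJ.
Qed.

Let le_esumZ (I : set T) (a : T -> \bar R) (c : R) : (0 <= c)%R ->
  (forall x, I x -> 0 <= a x) ->
  \esum_(x in I) (c%:E * a x) <= c%:E * \esum_(x in I) a x.
Proof.
move=> c0 a0; apply: ge_ereal_sup => _ [X [finX XI] <-].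
rewrite fsbig_finite // big_seq -ge0_sume_distrr; last first.
  by move=> x; rewrite in_fset_set // => /set_mem /XI /a0.
apply: lee_wpmul2l; first by rewrite lee_fin.
rewrite -big_seq -fsbig_finite //; apply: esum_ge; by exists X.
Qed.

Lemma esumZ (I : set T) (a : T -> \bar R) (c : R) : (0 <= c)%R ->
  (forall x, I x -> 0 <= a x) ->
  \esum_(x in I) (c%:E * a x) = c%:E * \esum_(x in I) a x.
Proof.
move=> c0 a0; have [->|cn0] := eqVneq c 0%R.
  by rewrite mul0e esum1 // => x _; rewrite mul0e.
have cp : (0 < c)%R by rewrite lt_def cn0.
apply/eqP; rewrite eq_le le_esumZ //=.
have ca0 x : I x -> 0 <= c%:E * a x by move=> Ix; rewrite mule_ge0 ?lee_fin // a0.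
have ci0 : (0 <= c^-1)%R by rewrite invr_ge0.
have h := @le_esumZ I _ c^-1 ci0 ca0.
rewrite (eq_esum (b := a)) in h; last first.
  by move=> x _; rewrite muleA -EFinM mulVf // mul1e.
apply: (le_trans (lee_wpmul2l _ h)); first by rewrite lee_fin.
by rewrite muleA -EFinM mulfV // mul1e.
Qed.
End EsumExtra.
Section Chain.
Local Open Scope ereal_scope.
Variables (R : realType) (V : finType) (X : choiceType) (step : V -> X -> X).
Variables (z : X) (w : seq V) (p : V -> R).
Hypotheses (p0 : forall i, (0 < p i)%R) (p1 : (\sum_i p i = 1)%R).
Hypotheses (wne : w != [::]) (wsync : forall x, foldr step x w = z).

Definition Pw (u : seq V) : R := \prod_(i <- u) p i.
Definition Aw : set (seq V) := [set u | ~~ infix w u].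
Definition fw u := foldr step z u.
Definition Hd (i : V) : set (seq V) := [set s | exists u, s = i :: u].

Lemma Pw_gt0 u : (0 < Pw u)%R.
Proof. by rewrite /Pw; elim: u => [|i u IH]; rewrite ?big_nil ?big_cons ?mulr_gt0. Qed.
Lemma Pw_ge0 u : (0 <= Pw u)%R. Proof. exact/ltW/Pw_gt0. Qed.
Lemma PwE_ge0 u : 0 <= (Pw u)%:E. Proof. by rewrite lee_fin Pw_ge0. Qed.
Lemma Pw_cons i u : Pw (i :: u) = (p i * Pw u)%R. Proof. by rewrite /Pw big_cons. Qed.
Lemma Pw_cat u v : Pw (u ++ v) = (Pw u * Pw v)%R. Proof. by rewrite /Pw big_cat. Qed.

Lemma decompK (Y : set (seq V)) (g : seq V -> \bar R) : (forall s, 0 <= g s) ->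
  \esum_(s in Y `&` ~` [set [::]]) g s =
  \sum_(i : V) \esum_(u in [set u | Y (i :: u)]) g (i :: u).
Proof.
move=> g0.
transitivity (\esum_(s in Y `&` ~` [set [::]])
                 \sum_(i : V) (if s \in Hd i then g s else 0)).
  apply: eq_esum => s [_ sn]; case: s sn => [|j u] sn; first by exfalso; apply: sn.
  rewrite (bigD1 j) //= big1 ?adde0.
    by rewrite ifT //; apply: mem_set; exists u.
  move=> i ij; case: ifP => // /set_mem [u' [ji _]].
  by move: ij; rewrite ji eqxx.
rewrite esum_sum; last by move=> s i _ _; case: ifP.
apply: eq_bigr => i _; rewrite -esum_mkcondr.
rewrite (reindex_esum [set u | Y (i :: u)] _ (cons i)) //; split.
- by move=> u Yu; split; [split|exists u].
- by move=> u v _ _ [].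
- by move=> s [[Ys _] [u su]]; subst s; exists u.
Qed.

Lemma esum_size n : \esum_(u in [set u : seq V | size u = n]) (Pw u)%:E = 1.
Proof.
elim: n => [|n IH].
  rewrite (_ : [set u | size u = 0%N] = [set [::]]).
    by rewrite esum_set1 ?PwE_ge0 // /Pw big_nil.
  by apply/seteqP; split => u /=; [move/size0nil|move=> ->].
rewrite (_ : [set u | size u = n.+1] = [set u : seq V | size u = n.+1] `&` ~` [set [::]]).
  rewrite decompK; last exact: PwE_ge0.
  transitivity (\sum_(i : V) (p i)%:E * \esum_(u in [set u : seq V | size u = n]) (Pw u)%:E).
    apply: eq_bigr => i _.
    rewrite -esumZ; last by move=> *; exact: PwE_ge0.
      rewrite (_ : [set u | size (i :: u) = n.+1] = [set u : seq V | size u = n]).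
        by apply: eq_esum => u _; rewrite Pw_cons EFinM.
      by apply/seteqP; split => u /=; [case|move=> ->].
    exact/ltW.
  by rewrite IH; under eq_bigr do rewrite mule1; rewrite sumEFin p1.
by apply/seteqP; split => u /=; [move=> h; split => // u0; move: h; rewrite u0|case].
Qed.
Definition bw n := \esum_(u in Aw `&` [set u | size u = n]) (Pw u)%:E.

Lemma bw_ge0 n : 0 <= bw n.
Proof. by apply: esum_ge0 => u _; exact: PwE_ge0. Qed.

Lemma bw_le1 n : bw n <= 1.
Proof. rewrite -(esum_size n); apply: esum_subset; exact: subIsetr. Qed.

Lemma bw_fin n : bw n \is a fin_num.
Proof. by rewrite ge0_fin_numE ?bw_ge0 // (le_lt_trans (bw_le1 n)) ?ltry. Qed.

Lemma esum_Bv :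
  \esum_(v in [set v : seq V | size v = size w] `&` ~` [set w]) (Pw v)%:E =
  (1 - Pw w)%:E.
Proof.
have h := esum_size (size w).
rewrite (esumID [set w]) in h; last by move=> *; exact: PwE_ge0.
rewrite (_ : [set v : seq V | size v = size w] `&` [set w] = [set w]) in h; last first.
  by apply/seteqP; split => v /=; [case|move=> ->].
rewrite esum_set1 ?PwE_ge0 // in h.
set Y := \esum_(v in _ `&` _) _ in h *.
have Y0 : 0 <= Y by apply: esum_ge0 => *; exact: PwE_ge0.
have Yf : Y \is a fin_num.
  rewrite ge0_fin_numE // (@le_lt_trans _ _ 1) ?ltry //.
  by rewrite -[leRHS]h leeDr // PwE_ge0.
have h2 : (Pw w + fine Y)%R = 1%R by apply: EFin_inj; rewrite EFinD fineK.
by rewrite -(fineK Yf) -h2 addrC addKr.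
Qed.

Lemma bw_rec n : bw (size w + n) <= (1 - Pw w)%:E * bw n.
Proof.
set L := size w.
set Bv := [set v : seq V | size v = L] `&` ~` [set w].
set Cn := Aw `&` [set u : seq V | size u = n].
have sub : Aw `&` [set u | size u = (L + n)%N] `<=`
           [set vu.1 ++ vu.2 | vu in Bv `*` Cn].
  move=> s [As ss]; exists (take L s, drop L s) => /=; last exact: cat_take_drop.
  split; split => /=.
  - by rewrite size_takel // ss leq_addr.
  - move=> /= tw; move: As; rewrite /Aw /= => /negP; apply.
    by apply: prefixW; rewrite prefixE tw eqxx.
  - rewrite /Aw /=; apply: contra As => h.
    by rewrite -(cat_take_drop L s); apply: infix_catl.
  - by rewrite size_drop ss addKn.
apply: (le_trans (esum_subset _ sub)).
rewrite esum_image; last first.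
  move=> [v1 u1] [v2 u2] /set_mem [[/= s1 _] _] /set_mem [[/= s2 _] _] /= e12.
  have ev : v1 = v2 by rewrite -(take_size_cat u1 s1) e12 take_size_cat.
  have eu : u1 = u2 by rewrite -(drop_size_cat u1 s1) e12 drop_size_cat.
  by rewrite ev eu.
rewrite (_ : Bv `*` Cn = Bv `*`` (fun _ => Cn)) //.
rewrite -(esum_esum (a := fun v u => (Pw (v ++ u))%:E)); last by move=> *; exact: PwE_ge0.
under eq_esum => v _.
  under eq_esum => u _ do rewrite Pw_cat EFinM.
  rewrite esumZ; [|exact: Pw_ge0|by move=> *; exact: PwE_ge0].
  over.
rewrite /= -/(bw n) -(fineK (bw_fin n)).
under eq_esum => v _ do rewrite muleC.
rewrite esumZ; [|by rewrite fine_ge0 // bw_ge0|by move=> *; exact: PwE_ge0].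
by rewrite esum_Bv muleC.
Qed.
Definition Zw := \esum_(u in Aw) (Pw u)%:E.

Lemma Zw_fin : Zw \is a fin_num.
Proof.
have -> : Zw = \esum_(k in [set: nat]) bw k.
  rewrite /Zw -esum_bigcupT; last by move=> *; exact: PwE_ge0.
    congr esum; apply/seteqP; split => [u Au|u [k _ []//]].
    by exists (size u) => //.
  by move=> i j _ _ [u [[_ <-] [_ <-]]].
rewrite -nneseries_esumT; last exact: bw_ge0.
have q1 : (Pw w <= 1)%R.
  have := esum_ge0 (S := [set v : seq V | size v = size w] `&` ~` [set w])
    (a := fun v => (Pw v)%:E) (fun v _ => PwE_ge0 v).
  by rewrite esum_Bv lee_fin subr_ge0.
have L0 : (0 < size w)%N by rewrite lt0n size_eq0.
have bnd : \sum_(0 <= k <oo) bw k <= ((size w)%:R / (1 - (1 - Pw w)))%:E.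
  apply: lime_le; first by apply: is_cvg_nneseries => *; exact: bw_ge0.
  apply: nearW => N.
  rewrite -(eq_bigr _ (fun k _ => fineK (bw_fin k))) sumEFin lee_fin.
  apply: geom_block_bound => //.
  - by rewrite subr_ge0 q1 /= ltrBlDl ltrDr Pw_gt0.
  - move=> k; rewrite -!lee_fin !fineK ?bw_fin ?bw_ge0 ?bw_le1 //.
  - move=> k; rewrite -lee_fin EFinM !fineK ?bw_fin //; exact: bw_rec.
rewrite ge0_fin_numE; last by apply: nneseries_ge0 => *; exact: bw_ge0.
exact: le_lt_trans bnd (ltry _).
Qed.
Lemma adde_cancel (a b c : \bar R) : a \is a fin_num -> a + b = a + c -> b = c.
Proof. by move=> af /(congr1 (fun x => x - a)); rewrite !(addeC a) !addeK. Qed.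

Lemma Aw_nil : Aw [::].
Proof. by rewrite /Aw /=; case: w wne. Qed.

Lemma Aw_tail i u : Aw (i :: u) -> Aw u.
Proof. by rewrite /Aw /=; apply: contra => h; rewrite ?infix_consl h orbT. Qed.

Lemma exit_z i u : Aw u -> ~ Aw (i :: u) -> fw (i :: u) = z.
Proof.
move=> Au nA; have : infix w (i :: u) by apply/negPn/negP.
rewrite infix_consl (negPf (Au : ~~ infix w u)) orbF => /seq.prefixP [s ->].
by rewrite /fw foldr_cat wsync.
Qed.

Lemma Zw_split : Zw = 1 + \sum_(i : V) \esum_(u in [set u | Aw (i :: u)]) (Pw (i :: u))%:E.
Proof.
rewrite /Zw (esumID [set [::]]); last by move=> *; exact: PwE_ge0.
rewrite decompK; last exact: PwE_ge0.
rewrite (_ : Aw `&` [set [::]] = [set [::]]); last first.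
  by apply/seteqP; split => u /=; [case|move=> ->; split => //; exact: Aw_nil].
by rewrite esum_set1 ?PwE_ge0 // /Pw big_nil.
Qed.

Definition Ew (i : V) := \esum_(u in Aw `&` ~` [set u | Aw (i :: u)]) (p i * Pw u)%:E.

Lemma Aw_inter i : Aw `&` [set u | Aw (i :: u)] = [set u | Aw (i :: u)].
Proof. by apply/seteqP; split => u /= => [[]//|h]; split => //; exact: Aw_tail h. Qed.

Lemma mass : \sum_(i : V) Ew i = 1.
Proof.
set S := \sum_(i : V) \esum_(u in [set u | Aw (i :: u)]) (Pw (i :: u))%:E.
have S0 : 0 <= S by apply: sume_ge0 => i _; apply: esum_ge0 => *; exact: PwE_ge0.
have h1 := Zw_split; rewrite -/S in h1.
have h2 : Zw = S + \sum_(i : V) Ew i.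
  rewrite -big_split /=.
  rewrite -[LHS]mul1e -p1 -sumEFin ge0_sume_distrl; last by move=> i _; rewrite lee_fin ltW.
  apply: eq_bigr => i _.
  rewrite /Zw -esumZ; [|exact/ltW|by move=> *; exact: PwE_ge0].
  rewrite (esumID [set u | Aw (i :: u)]); last first.
    by move=> *; rewrite -EFinM lee_fin mulr_ge0 ?Pw_ge0 // ltW.
  rewrite Aw_inter /Ew; congr (_ + _).
  by apply: eq_esum => u _; rewrite Pw_cons EFinM.
have Sf : S \is a fin_num.
  rewrite ge0_fin_numE // (@le_lt_trans _ _ Zw) //.
    by rewrite h1 leeDr.
  by rewrite -ge0_fin_numE ?Zw_fin //; rewrite h1 adde_ge0.
apply: (adde_cancel Sf); by rewrite -h2 h1 addeC.
Qed.
Definition rho (y : X) := \esum_(u in Aw `&` [set u | fw u = y]) (Pw u)%:E.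

Lemma stat (y : X) :
  \esum_(u in Aw) (Pw u * \sum_(i | step i (fw u) == y) p i)%:E = rho y.
Proof.
set g := fun i u => ((if fw (i :: u) == y then p i * Pw u else 0)%R)%:E.
have g0 i u : 0 <= g i u by rewrite /g lee_fin; case: ifP => // _; rewrite mulr_ge0 ?Pw_ge0 // ltW.
transitivity (\esum_(u in Aw) \sum_(i : V) g i u).
  apply: eq_esum => u _; rewrite sumEFin mulr_sumr big_mkcond /=.
  by congr (_%:E); apply: eq_bigr => i _; rewrite /g /=; case: ifP => //; rewrite mulrC.
rewrite esum_sum; last by move=> *; exact: g0.
transitivity (\sum_(i : V) \esum_(u in [set u | Aw (i :: u)]) g i u +
              (if z == y then 1 else 0)).
  rewrite -mass.
  case: (eqVneq z y) => zy.
    rewrite -big_split /=; apply: eq_bigr => i _.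
    rewrite (esumID [set u | Aw (i :: u)]) // Aw_inter; congr (_ + _).
    apply: eq_esum => u [Au nA]; rewrite /g exit_z // zy eqxx //.
  rewrite adde0; apply: eq_bigr => i _.
  rewrite (esumID [set u | Aw (i :: u)]) // Aw_inter [X in _ + X]esum1 ?adde0 //.
  by move=> u [Au nA]; rewrite /g exit_z // (negPf zy).
rewrite /rho (esumID [set [::]]); last by move=> *; exact: PwE_ge0.
rewrite decompK; last exact: PwE_ge0.
rewrite [RHS]addeC; congr (_ + _).
  apply: eq_bigr => i _.
  rewrite (_ : [set u | (Aw `&` [set u | fw u = y]) (i :: u)] =
               [set u | Aw (i :: u)] `&` [set u | fw (i :: u) = y]) //.
  rewrite esum_mkcondr; apply: eq_esum => u _; rewrite /g.
  case: (eqVneq (fw (i :: u)) y) => e.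
    by rewrite ifT ?Pw_cons //; apply: mem_set.
  rewrite ifF //; apply/negP => /set_mem /= h; move/eqP: e; apply; exact: h.
case: (eqVneq z y) => zy.
  rewrite (_ : (Aw `&` [set u | fw u = y]) `&` [set [::]] = [set [::]]).
    by rewrite esum_set1 ?PwE_ge0 // /Pw big_nil.
  by apply/seteqP; split => u /=; [case|move=> ->; split => //; split => //; exact: Aw_nil].
by rewrite esum1 // => u [[_ fu] /= u0]; move: fu; rewrite u0 /fw /= => fu; move: zy; rewrite fu eqxx.
Qed.

Lemma reindexS (S : set X) (h : seq V -> \bar R) : (forall u, S (fw u)) ->
  (forall u, 0 <= h u) ->
  \esum_(x in S) \esum_(u in Aw `&` [set u | fw u = x]) h u = \esum_(u in Aw) h u.
Proof.
move=> Sf h0; rewrite (esum_esum (a := fun x u => h u)) //.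
rewrite (reindex_esum Aw _ (fun u => (fw u, u))) //; split.
- by move=> u Au; split; [exact: Sf|split].
- by move=> u v _ _ [_ ->].
- by move=> [x u] /= [Sx [Au fu]]; exists u => //; rewrite fu.
Qed.

Theorem chain_stationary (S : set X) : (forall u, S (fw u)) ->
  exists pi : X -> R,
    (forall x, (0 <= pi x)%R) /\
    (forall x, ~ S x -> pi x = 0%R) /\
    (\esum_(x in S) (pi x)%:E = 1) /\
    (forall y, S y ->
       (pi y)%:E = \esum_(x in S) (pi x * \sum_(i | step i x == y) p i)%:E).
Proof.
move=> Sf.
have Z1 : 1 <= Zw.
  rewrite /Zw; apply: le_trans (esum_subset _ (_ : [set [::]] `<=` Aw)).
    by rewrite esum_set1 ?PwE_ge0 // /Pw big_nil.
  by move=> u ->; exact: Aw_nil.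
have Zf := Zw_fin.
have zpos : (0 < fine Zw)%R by rewrite -lte_fin fineK // (lt_le_trans _ Z1).
have rho0 x : 0 <= rho x by apply: esum_ge0 => *; exact: PwE_ge0.
have rhof x : rho x \is a fin_num.
  rewrite ge0_fin_numE // (le_lt_trans _ (_ : Zw < +oo)) //.
    by apply: esum_subset; exact: subIsetl.
  by rewrite -ge0_fin_numE // (le_trans _ Z1).
pose c := (fine Zw)^-1%R.
have c0 : (0 <= c)%R by rewrite invr_ge0 ltW.
exists (fun x => fine (rho x) / fine Zw)%R.
have piE x : ((fine (rho x) / fine Zw)%R)%:E = c%:E * rho x.
  by rewrite mulrC EFinM fineK.
split; first by move=> x; apply: divr_ge0; [apply: fine_ge0 | apply: ltW].
split.
  move=> x nSx; rewrite /rho esum1 ?mul0r // => u [_ fu]; exfalso; apply: nSx.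
  by rewrite -fu.
split.
  under eq_esum => x _ do rewrite piE.
  rewrite esumZ // reindexS //; last exact: PwE_ge0.
  by rewrite -/Zw -(fineK Zf) -EFinM mulVf ?gt_eqF.
move=> y Sy.
under eq_esum => x _ do rewrite EFinM piE -muleA.
rewrite esumZ //; last first.
  by move=> x _; rewrite mule_ge0 // lee_fin sumr_ge0 // => i _; exact: ltW.
rewrite piE; congr (_ * _); rewrite -stat -(reindexS (S := S)) //; last first.
  by move=> u; rewrite lee_fin mulr_ge0 ?Pw_ge0 // sumr_ge0 // => i _; exact: ltW.
apply: eq_esum => x _; rewrite /rho muleC -esumZ //; last by move=> *; exact: PwE_ge0.
  by apply: eq_esum => u [_ fu]; rewrite -EFinM mulrC fu.
by apply: sumr_ge0 => i _; exact: ltW.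
Qed.
End Chain.
Lemma T_in_S (V : finType) (e : rel V) i (x : config V) : @state_space V (T e i x).
Proof.
move=> j; rewrite /T ffunE subr_le0; exact: le_bigmax.
Qed.

Unset Implicit Arguments.
Theorem mainTheorem4 (R : realType) (V : finType) (e : rel V)
  (He : simple_graph e) (Hconn : connected_graph e)
  (p : V -> R) (Hp_pos : forall i, 0 < p i) (Hp_sum : \sum_(i : V) p i = 1) :
  exists pi : config V -> R,
    (forall x, 0 <= pi x) /\
    (forall x, ~ @state_space V x -> pi x = 0) /\
    (\esum_(x in @state_space V) (pi x)%:E = 1%E) /\
    (forall y, @state_space V y ->
       (pi y)%:E = \esum_(x in @state_space V) (pi x * M e p x y)%:E).
Proof.
have [r _] : exists r : V, true.
  case: (pickP (@predT V)) => [r _|h]; first by exists r.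
  by move: Hp_sum; rewrite big_pred0 // => /eqP; rewrite eq_sym oner_eq0.
have [w [wne wsync]] := sync He.1 Hconn r.
pose x0 : config V := [ffun => 0].
pose z := foldr (T e) x0 w.
have ws : forall x, foldr (T e) x w = z by move=> x; rewrite /z (wsync x x0).
have Sf : forall u, @state_space V (fw (T e) z u).
  case => [|i u] /=; last exact: T_in_S.
  have [i [w' ew]] : exists i w', w = i :: w' by case: (w) wne => // i w' _; exists i, w'.
  by rewrite /fw /= /z ew /=; exact: T_in_S.
exact: (chain_stationary Hp_pos Hp_sum wne ws Sf).
Qed.
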